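(* Let $Q$ be an $n\times n$ real symmetric matrix, let $\Delta_n := \{x \in \mathbb{R}^n : x \ge 0,\ \sum_{j=1}^n x_j = 1\}$, and let $\nu(Q) := \min_{x \in \Delta_n} x^TQx$. For $x \in \Delta_n$ let $\mathcal{P}(x) = \{j : x_j > 0\}$, and let $e_j$ denote the $j$-th unit vector of $\mathbb{R}^n$. Then \[ \nu(Q) = \min_{x \in \Delta_n} \max_{j \in \mathcal{P}(x)} e_j^T Q x . \] *)

(* Defs.v *)
From mathcomp Require Import all_boot all_order all_algebra.
From mathcomp Require Import reals.
Set Implicit Arguments. Unset Strict Implicit. Unset Printing Implicit Defensive.
Import Order.TTheory GRing.Theory Num.Theory.
Local Open Scope ring_scope.

Definition in_simplex (R : realType) (n : nat) (x : 'cV[R]_n) : Prop :=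
  (forall j : 'I_n, 0 <= x j 0) /\ \sum_(j < n) x j 0 = 1.

Definition qform (R : realType) (n : nat) (Q : 'M[R]_n) (x : 'cV[R]_n) : R :=
  (x^T *m Q *m x) 0 0.

Definition ejQx (R : realType) (n : nat) (Q : 'M[R]_n) (x : 'cV[R]_n) (j : 'I_n) : R :=
  (Q *m x) j 0.

Definition is_support_max (R : realType) (n : nat) (Q : 'M[R]_n) (x : 'cV[R]_n) (v : R) : Prop :=
  (exists j : 'I_n, 0 < x j 0 /\ ejQx Q x j = v) /\
  (forall j : 'I_n, 0 < x j 0 -> ejQx Q x j <= v).

Definition is_min_on_simplex (R : realType) (n : nat) (f : 'cV[R]_n -> R) (m : R) : Prop :=
  (exists x, in_simplex x /\ f x = m) /\ (forall x, in_simplex x -> m <= f x).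

(* Main.v *)
Require Import Defs.
From mathcomp Require Import all_boot all_order all_algebra.
From mathcomp Require Import reals.
From mathcomp Require Import boolp classical_sets topology normedtype derive.
From mathcomp Require Import ring lra.
Import Order.TTheory GRing.Theory Num.Theory.
Import numFieldTopology.Exports numFieldNormedType.Exports.
Local Open Scope ring_scope.

Section S.
Variables (R : realType) (n : nat) (Q : 'M[R]_n).

Lemma cont_sum {T : topologicalType} (r : seq 'I_n) (F : 'I_n -> T -> R) :
  (forall i, continuous (F i)) -> continuous (fun x => \sum_(i <- r) F i x).
Proof.
move=> HF; elim: r => [|i r IH].
  under eq_fun do rewrite big_nil. exact: cst_continuous.
under eq_fun do rewrite big_cons.
move=> x; apply: continuousD; [exact: HF | exact: IH].
Qed.

Definition Aset : set 'rV[R]_n :=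
  ([set v : 'rV[R]_n | forall i, `[0, 1]%classic (v ord0 i)] `&`
   [set v | \sum_i v ord0 i = 1])%classic.

Lemma cA : compact Aset.
Proof.
apply: compact_closedI.
  apply: (@rV_compact R n (fun _ => `[0, 1]%classic)) => _; exact: segment_compact.
have := @preimage_closed _ _ (fun v : 'rV[R]_n => \sum_i v ord0 i) [set x | x = 1]%classic.
apply.
  move=> v _; apply: cont_sum => i; exact: coord_continuous.
exact: closed_eq.
Qed.

Lemma qform_sum x : qform Q x = \sum_j x j 0 * ejQx Q x j.
Proof. by rewrite /qform /ejQx -mulmxA mxE; apply: eq_bigr => j _; rewrite mxE. Qed.

Lemma qf_cont : continuous (fun v : 'rV[R]_n => qform Q v^T).
Proof.
have -> : (fun v : 'rV[R]_n => qform Q v^T) =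
   (fun v => \sum_j \sum_i v ord0 j * Q j i * v ord0 i).
  apply: funext => v; rewrite qform_sum; apply: eq_bigr => j _.
  rewrite /ejQx !mxE mulr_sumr; apply: eq_bigr => i _; by rewrite !mxE mulrA.
apply: cont_sum => j; apply: cont_sum => i v.
apply: (@continuousM _ _ (fun v : 'rV[R]_n => v ord0 j * Q j i) (fun v => v ord0 i) v).
  apply: (@continuousM _ _ (fun v : 'rV[R]_n => v ord0 j) (fun v => Q j i) v).
    exact: coord_continuous.
  exact: cst_continuous.
exact: coord_continuous.
Qed.

Lemma inA x : in_simplex x -> Aset x^T.
Proof.
move=> [H0 H1]; split => /=.
  move=> i; rewrite mxE /= in_itv /= H0 /=.
  rewrite -H1 (bigD1 i) //= lerDl; apply: sumr_ge0 => j _; exact: H0.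
by under eq_bigr do rewrite mxE.
Qed.

Lemma Ain c : Aset c -> in_simplex c^T.
Proof.
move=> [H0 H1]; split.
  move=> j; rewrite mxE; have := H0 j; rewrite /= in_itv /= => /andP[] //.
by under eq_bigr do rewrite mxE.
Qed.

Lemma qform_lin (a b : R) x y : qform Q (a *: x + b *: y) =
  a^+2 * qform Q x + a * b * ((x^T *m Q *m y) 0 0 + (y^T *m Q *m x) 0 0)
  + b^+2 * qform Q y.
Proof.
rewrite /qform.
have -> : (a *: x + b *: y)^T = a *: x^T + b *: y^T by apply/matrixP => i j; rewrite !mxE.
rewrite !mulmxDl !mulmxDr.
rewrite -!scalemxAl -!scalemxAr -?scalemxAl !scalerA.
set p1 := x^T *m Q *m x; set p2 := x^T *m Q *m y; set p3 := y^T *m Q *m x; set p4 := y^T *m Q *m y.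
clearbody p1 p2 p3 p4.
rewrite !mxE; ring.
Qed.

Lemma small_pos (a b d : R) : 0 < d ->
  (forall s, 0 < s -> s <= d -> 0 <= a + s * b) -> 0 <= a.
Proof.
move=> d0 H; rewrite leNgt; apply/negP => a0.
pose s := Num.min d (- a / (`|b| + 1)).
have b1 : 0 < `|b| + 1 by have := normr_ge0 b; lra.
have s0 : 0 < s.
  rewrite /s lt_min d0 /=; apply: divr_gt0 => //; lra.
have sd : s <= d by rewrite /s ge_min lexx.
have sa : s * (`|b| + 1) <= - a.
  rewrite -ler_pdivlMr // /s ge_min lexx orbT //.
have := H s s0 sd.
have : s * b <= s * `|b| by rewrite ler_pM2l // ler_norm.
lra.
Qed.

Lemma cross1 (hQ : Q^T = Q) x k : (x^T *m Q *m delta_mx k (0 : 'I_1)) 0 0 = ejQx Q x k.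
Proof.
rewrite -colE /ejQx !mxE; apply: eq_bigr => i _.
rewrite !mxE mulrC; congr (_ * _); by rewrite -{1}hQ mxE.
Qed.

Lemma cross2 x k : ((delta_mx k (0 : 'I_1))^T *m Q *m x) 0 0 = ejQx Q x k.
Proof. by rewrite trmx_delta -mulmxA -rowE mxE. Qed.

Lemma qform_e k : qform Q (delta_mx k (0 : 'I_1)) = Q k k.
Proof. by rewrite /qform trmx_delta -rowE -colE !mxE. Qed.

Lemma perturb (hQ : Q^T = Q) x k s :
  qform Q ((1 + s) *: x + (- s) *: delta_mx k (0 : 'I_1)) =
  qform Q x + s * (2 * (qform Q x - ejQx Q x k) + s * (qform Q x - 2 * ejQx Q x k + Q k k)).
Proof. rewrite qform_lin cross1 // cross2 qform_e; ring. Qed.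

Lemma pert_simplex (x : 'cV[R]_n) k (s : R) : in_simplex x -> -1 <= s -> s <= x k 0 ->
  in_simplex ((1 + s) *: x + (- s) *: delta_mx k (0 : 'I_1)).
Proof.
move=> [H0 H1] s1 s2; split.
  move=> j; rewrite !mxE; have := H0 j; have := H0 k.
  rewrite eqxx andbT; case: eqP => [->|_] /=; rewrite ?mulr1 ?mulr0; nra.
under eq_bigr do rewrite !mxE.
rewrite big_split /= -!mulr_sumr H1 (bigD1 k) //= eqxx big1 => [|j /negbTE -> //].
simpl; ring.
Qed.

End S.

Theorem proposition1 (R : realType) (n : nat) (Q : 'M[R]_n)
    (hn : (0 < n)%N) (hQ : Q^T = Q) :
  exists nu : R,
    is_min_on_simplex (qform Q) nu /\
    (exists x : 'cV[R]_n, in_simplex x /\ is_support_max Q x nu) /\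
    (forall (x : 'cV[R]_n) (v : R), in_simplex x -> is_support_max Q x v -> nu <= v).
Proof.
have A0 : (Aset R n !=set0)%classic.
  exists (delta_mx (Ordinal hn) (0 : 'I_1))^T; apply: inA; split => [j|]; rewrite ?mxE //.
  rewrite (bigD1 (Ordinal hn)) //= !mxE eqxx big1 ?addr0 // => j /negbTE.
  by rewrite mxE => ->.
have [c cA cmin] := compact_EVT_min A0 (cA R n) (continuous_subspaceT (@qf_cont R n Q)).
rewrite inE in cA.
set xs := c^T.
have Hxs : in_simplex xs := @Ain R n c cA.
have Hmin x : in_simplex x -> qform Q xs <= qform Q x.
  move=> Hx; have := cmin x^T; rewrite trmxK; apply; rewrite inE; exact: (@inA R n).
set nu := qform Q xs.
exists nu; split; first by split; [exists xs | exact: Hmin].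
split.
  exists xs; split => //.
  have ge k : nu <= ejQx Q xs k.
    set cc := ejQx Q xs k.
    have := @small_pos R (2 * (cc - nu)) (nu - 2 * cc + Q k k) 1 ltr01.
    have H : forall t, 0 < t -> t <= 1 -> 0 <= 2 * (cc - nu) + t * (nu - 2 * cc + Q k k).
      move=> t t0 t1.
      have := Hmin _ (@pert_simplex R n xs k (- t) Hxs _ _).
      rewrite perturb // -/nu -/cc.
      set B := (nu - 2 * cc + Q k k).
      move=> /(_ _ _) h.
      have {h} h : 0 <= t * (2 * (cc - nu) + t * B).
        have := h ltac:(lra) ltac:(have := Hxs.1 k; lra). nra.
      by rewrite pmulr_rge0 in h.
    move=> /(_ H); lra.
  have le k : 0 < xs k 0 -> ejQx Q xs k <= nu.
    move=> xk; set cc := ejQx Q xs k.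
    have := @small_pos R (2 * (nu - cc)) (nu - 2 * cc + Q k k) (xs k 0) xk.
    have H : forall t, 0 < t -> t <= xs k 0 -> 0 <= 2 * (nu - cc) + t * (nu - 2 * cc + Q k k).
      move=> t t0 t1.
      have := Hmin _ (@pert_simplex R n xs k t Hxs _ _).
      rewrite perturb // -/nu -/cc.
      set B := (nu - 2 * cc + Q k k).
      move=> /(_ _ _) h.
      have {h} h : 0 <= t * (2 * (nu - cc) + t * B).
        have := h ltac:(lra) t1. nra.
      by rewrite pmulr_rge0 in h.
    move=> /(_ H); lra.
  have [j xj] : exists j, 0 < xs j 0.
    case: (pickP (fun j => 0 < xs j 0)) => [j Hj|H]; first by exists j.
    exfalso; have := Hxs.2; rewrite big1 => [|j _].
      by move=> /eqP; rewrite eq_sym oner_eq0.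
    by apply/le_anti; rewrite Hxs.1 andbT leNgt H.
  split; last by move=> k /le.
  by exists j; split => //; apply/le_anti; rewrite le // ge.
move=> x v Hx [_ Hv].
apply: (le_trans (Hmin x Hx)); rewrite qform_sum.
apply: (@le_trans _ _ (\sum_j x j 0 * v)).
  apply: ler_sum => j _.
  have [xp|xle] := ltP 0 (x j 0); first by rewrite ler_pM2l // Hv.
  have -> : x j 0 = 0 by apply/le_anti; rewrite xle Hx.1.
  by rewrite !mul0r.
by rewrite -mulr_suml Hx.2 mul1r.
Qed.
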